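(* Let $\mathcal{X}_0=\{\mathbf{x}^{(0)}_1,\dots,\mathbf{x}^{(0)}_{n_0}\}$ and $\mathcal{X}_1=\{\mathbf{x}^{(1)}_1,\dots,\mathbf{x}^{(1)}_{n_1}\}$ be finite sets of points in $\mathbb{R}^d$, let $\mathcal{P}_0,\mathcal{P}_1$ be the uniform (empirical) distributions on them, and let $\mathbf{X}_0\sim\mathcal{P}_0$, $\mathbf{X}_1\sim\mathcal{P}_1$. Let $f:\mathbb{R}^d\times\{0,1\}\to[0,1]$, and let $\mathcal{P}_{f_0},\mathcal{P}_{f_1}$ be the empirical distributions on $f(\mathcal{X}_0)=\{f(\mathbf{x},0):\mathbf{x}\in\mathcal{X}_0\}$ and $f(\mathcal{X}_1)=\{f(\mathbf{x},1):\mathbf{x}\in\mathcal{X}_1\}$, i.e. the distributions of $f(\mathbf{X}_0,0)$ and $f(\mathbf{X}_1,1)$. Assume the supports of $\mathcal{P}_{f_0}$ and $\mathcal{P}_{f_1}$ share $m\ (\le n_0,n_1)$ common points. Then for any $\delta\ge0$, if $\Delta\mathrm{TVDP}(f)\le\delta$, there exists a joint distribution $\mathbb{Q}$ of $(\mathbf{X}_0,\mathbf{X}_1)$ with marginals $\mathcal{P}_0$ and $\mathcal{P}_1$ such that $\Delta\mathrm{MDP}(f,\mathbb{Q})\le\delta$.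
   Context: $\Delta\mathrm{TVDP}(f):=\mathrm{TV}(\mathcal{P}_{f_0},\mathcal{P}_{f_1})$, where for discrete distributions $\mathrm{TV}(\mathcal{Q}_1,\mathcal{Q}_2)=\sup_B|\mathcal{Q}_1(B)-\mathcal{Q}_2(B)|=\tfrac12\sum_z|\mathcal{Q}_1(z)-\mathcal{Q}_2(z)|$. For a joint distribution $\mathbb{Q}$ of $(\mathbf{X}_0,\mathbf{X}_1)$ with marginals $\mathcal{P}_0,\mathcal{P}_1$ (a stochastic transport map), $\Delta\mathrm{MDP}(f,\mathbb{Q}):=\mathbb{E}_{(\mathbf{X}_0,\mathbf{X}_1)\sim\mathbb{Q}}|f(\mathbf{X}_0,0)-f(\mathbf{X}_1,1)|$. *)

(* Defs.v *)
From mathcomp Require Import all_boot all_order all_algebra.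
From mathcomp Require Import reals.
Set Implicit Arguments. Unset Strict Implicit. Unset Printing Implicit Defensive.
Import Order.TTheory GRing.Theory Num.Theory.
Local Open Scope ring_scope.

Section Defs.
Variable R : realType.

Definition emp_mass (n : nat) (v : 'I_n -> R) (z : R) : R :=
  #|[set i | v i == z]|%:R / n%:R.

Definition emp_support (n : nat) (v : 'I_n -> R) : seq R :=
  undup [seq v i | i <- enum 'I_n].

Definition TV_emp (n0 n1 : nat) (v0 : 'I_n0 -> R) (v1 : 'I_n1 -> R) : R :=
  2^-1 * \sum_(z <- undup (emp_support v0 ++ emp_support v1))
           `|emp_mass v0 z - emp_mass v1 z|.

Definition DeltaTVDP (d n0 n1 : nat) (f : 'rV[R]_d -> bool -> R)
    (x0 : 'I_n0 -> 'rV[R]_d) (x1 : 'I_n1 -> 'rV[R]_d) : R :=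
  TV_emp (fun i => f (x0 i) false) (fun j => f (x1 j) true).

(* A joint distribution (coupling) of X_0 ~ Unif(X_0) and X_1 ~ Unif(X_1):
   since the points are distinct, it is a nonnegative mass function on pairs of
   indices whose marginals are uniform. *)
Definition is_coupling (n0 n1 : nat) (Q : 'I_n0 -> 'I_n1 -> R) : Prop :=
  (forall i j, 0 <= Q i j) /\
  (forall i, \sum_(j < n1) Q i j = n0%:R^-1) /\
  (forall j, \sum_(i < n0) Q i j = n1%:R^-1).

Definition DeltaMDP (d n0 n1 : nat) (f : 'rV[R]_d -> bool -> R)
    (x0 : 'I_n0 -> 'rV[R]_d) (x1 : 'I_n1 -> 'rV[R]_d)
    (Q : 'I_n0 -> 'I_n1 -> R) : R :=
  \sum_(i < n0) \sum_(j < n1) Q i j * `|f (x0 i) false - f (x1 j) true|.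

End Defs.

(* Main.v *)
Require Import Defs.
From mathcomp Require Import all_boot all_order all_algebra.
From mathcomp Require Import reals.
From mathcomp Require Import ring lra.
Import Order.TTheory GRing.Theory Num.Theory.
Local Open Scope ring_scope.

Section Gen.
Local Set Implicit Arguments. Local Unset Strict Implicit.
Variable R : realType.

Definition cnt n (v : 'I_n -> R) z : R := #|[set i | v i == z]|%:R.

Lemma sum_ind n (v : 'I_n -> R) z (F : R) :
  \sum_i (v i == z)%:R * F = cnt v z * F.
Proof.
rewrite -big_distrl /=; congr (_ * _).
rewrite /cnt -sum1_card natr_sum [RHS]big_mkcond /=.
by apply: eq_bigr => i _; rewrite inE; case: eqP.
Qed.

Lemma sum_part n (v : 'I_n -> R) (s : seq R) (F : 'I_n -> R) :
  uniq s -> (forall i, v i \in s) ->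
  \sum_i F i = \sum_(z <- s) \sum_i (v i == z)%:R * F i.
Proof.
move=> us vs; rewrite exchange_big /=; apply: eq_bigr => i _.
rewrite -big_distrl /=.
suff -> : \sum_(z <- s) (v i == z)%:R = 1 :> R by rewrite mul1r.
rewrite (big_rem _ (vs i)) /= eqxx big1_seq ?addr0 // => z /andP[_ hz].
case: eqP => // e; move: hz; rewrite -e.
by rewrite mem_rem_uniqF.
Qed.

Lemma cnt_pos n (w : 'I_n -> R) i : 0 < cnt w (w i).
Proof. by rewrite /cnt ltr0n; apply/card_gt0P; exists i; rewrite inE. Qed.

Lemma sum_gen n (w : 'I_n -> R) (g : R -> R) (S : seq R) :
  (0 < n)%N -> uniq S -> (forall i, w i \in S) ->
  (forall z, cnt w z = 0 -> g z = 0) ->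
  \sum_i (n%:R^-1 - g (w i) / cnt w (w i)) = 1 - \sum_(z <- S) g z.
Proof.
move=> hn uS wS hg; rewrite sumrB sumr_const card_ord -[_ *+ n]mulr_natr mulVf ?pnatr_eq0 -?lt0n //.
congr (_ - _); rewrite (sum_part (fun i => g (w i) / cnt w (w i)) uS wS); apply: eq_bigr => z _.
transitivity (\sum_i (w i == z)%:R * (g z / cnt w z)).
  by apply: eq_bigr => i _; case: eqP => [->|]; rewrite ?mul0r.
rewrite sum_ind; have [h|h] := eqVneq (cnt w z) 0.
  by rewrite h hg // mul0r.
by rewrite mulrCA divff // mulr1.
Qed.

Lemma sum_mass n (w : 'I_n -> R) (S : seq R) :
  (0 < n)%N -> uniq S -> (forall i, w i \in S) ->
  \sum_(z <- S) emp_mass w z = 1.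
Proof.
move=> hn uS wS.
have := sum_part (fun _ => n%:R^-1) uS wS.
rewrite sumr_const card_ord -[_ *+ n]mulr_natr mulVf ?pnatr_eq0 -?lt0n // => ->.
by apply: eq_bigr => z _; rewrite sum_ind.
Qed.

Section Main.
Variables (n0 n1 : nat) (a : 'I_n0 -> R) (b : 'I_n1 -> R).
Hypotheses (hn0 : (0 < n0)%N) (hn1 : (0 < n1)%N).

Let mn z := Num.min (emp_mass a z) (emp_mass b z).
Let u i := n0%:R^-1 - mn (a i) / cnt a (a i).
Let v j := n1%:R^-1 - mn (b j) / cnt b (b j).
Let S := undup (emp_support a ++ emp_support b).
Let T := \sum_i u i.

Lemma mass_ge0 n (w : 'I_n -> R) z : 0 <= emp_mass w z.
Proof. by rewrite /emp_mass divr_ge0 ?ler0n. Qed.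

Lemma mn_ge0 z : 0 <= mn z.
Proof. by rewrite /mn le_min !mass_ge0. Qed.

Lemma mn_a z : cnt a z = 0 -> mn z = 0.
Proof.
move=> h; have e : emp_mass a z = 0 by rewrite /emp_mass -/(cnt a z) h mul0r.
by rewrite /mn e; apply/min_l/mass_ge0.
Qed.

Lemma mn_b z : cnt b z = 0 -> mn z = 0.
Proof.
move=> h; have e : emp_mass b z = 0 by rewrite /emp_mass -/(cnt b z) h mul0r.
by rewrite /mn e; apply/min_r/mass_ge0.
Qed.

Lemma u_ge0 i : 0 <= u i.
Proof.
rewrite /u subr_ge0; have hc := cnt_pos a i.
rewrite ler_pdivrMr // mulrC -[_ / _]/(emp_mass a (a i)).
by rewrite /mn ge_min lexx.
Qed.

Lemma v_ge0 j : 0 <= v j.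
Proof.
rewrite /v subr_ge0; have hc := cnt_pos b j.
rewrite ler_pdivrMr // mulrC -[_ / _]/(emp_mass b (b j)).
by rewrite /mn ge_min lexx orbT.
Qed.

Lemma uS : uniq S. Proof. exact: undup_uniq. Qed.
Lemma aS i : a i \in S.
Proof. by rewrite /emp_support mem_undup mem_cat mem_undup map_f ?mem_enum. Qed.
Lemma bS j : b j \in S.
Proof. by rewrite /S mem_undup mem_cat; apply/orP; right; rewrite /emp_support mem_undup map_f ?mem_enum. Qed.

Lemma sumu : T = 1 - \sum_(z <- S) mn z.
Proof. exact: sum_gen hn0 uS aS mn_a. Qed.
Lemma sumv : \sum_j v j = T.
Proof. by rewrite sumu; exact: sum_gen hn1 uS bS mn_b. Qed.

Lemma TVE : TV_emp a b = T.
Proof.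
rewrite sumu /TV_emp -/S.
have -> : \sum_(z <- S) `|emp_mass a z - emp_mass b z|
   = \sum_(z <- S) emp_mass a z + \sum_(z <- S) emp_mass b z - 2%:R * \sum_(z <- S) mn z.
  rewrite -big_split /= mulr_sumr -sumrB; apply: eq_bigr => z _.
  rewrite /mn /=; have [h|h] := leP (emp_mass a z) (emp_mass b z).
    rewrite ler0_norm ?subr_le0 //; lra.
  rewrite gtr0_norm ?subr_gt0 //; lra.
rewrite !sum_mass //; [|exact: uS|exact: bS|exact: uS|exact: aS]; lra.
Qed.


Lemma uT i : u i * T / T = u i.
Proof.
have [h|h] := eqVneq T 0; last by rewrite mulfK.
have -> : u i = 0 by apply: (psumr_eq0P (fun i _ => u_ge0 i) h).
by rewrite !mul0r.
Qed.

Lemma vT j : v j * T / T = v j.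
Proof.
have [h|h] := eqVneq T 0; last by rewrite mulfK.
have -> : v j = 0.
  have hv := sumv; rewrite h in hv; exact: (psumr_eq0P (P:=xpredT) (fun j _ => v_ge0 j) hv).
by rewrite !mul0r.
Qed.

Definition Qc i j := (a i == b j)%:R * (mn (a i) / (cnt a (a i) * cnt b (b j)))
   + u i * v j / T.

Lemma T_ge0 : 0 <= T.
Proof. by apply: sumr_ge0 => i _; apply: u_ge0. Qed.

Lemma Qc_ge0 i j : 0 <= Qc i j.
Proof.
have := cnt_pos a i; have := cnt_pos b j; have := T_ge0.
have := u_ge0 i; have := v_ge0 j; have := mn_ge0 (a i).
move=> *; rewrite /Qc addr_ge0 // !mulr_ge0 ?invr_ge0 ?ler0n ?mulr_ge0 // ltW //.
Qed.

Lemma Qc_row i : \sum_j Qc i j = n0%:R^-1.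
Proof.
rewrite big_split /=.
transitivity (\sum_j (b j == a i)%:R * (mn (a i) / (cnt a (a i) * cnt b (a i)))
   + u i * T / T).
  congr (_ + _).
    by apply: eq_bigr => j _; rewrite eq_sym; case: eqP => [->|]; rewrite ?mul0r.
  rewrite -sumv mulr_sumr mulr_suml; apply: eq_bigr => j _; by [].
rewrite uT sum_ind; have ha := cnt_pos a i.
have [h|h] := eqVneq (cnt b (a i)) 0.
  by rewrite /u /= h mn_b // !mul0r add0r subr0.
have -> : cnt b (a i) * (mn (a i) / (cnt a (a i) * cnt b (a i))) = mn (a i) / cnt a (a i).
  by field; rewrite h gt_eqF.
by rewrite /u /= addrC subrK.
Qed.

Lemma Qc_col j : \sum_i Qc i j = n1%:R^-1.
Proof.
rewrite big_split /=.
transitivity (\sum_i (a i == b j)%:R * (mn (b j) / (cnt a (b j) * cnt b (b j)))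
   + v j * T / T).
  congr (_ + _).
    by apply: eq_bigr => i _; case: eqP => [->|]; rewrite ?mul0r.
  rewrite /T mulr_sumr mulr_suml; apply: eq_bigr => i _.
  by rewrite [v j * _]mulrC.
rewrite vT sum_ind; have hb := cnt_pos b j.
have [h|h] := eqVneq (cnt a (b j)) 0.
  by rewrite /v /= h mn_a // !mul0r add0r subr0.
have -> : cnt a (b j) * (mn (b j) / (cnt a (b j) * cnt b (b j))) = mn (b j) / cnt b (b j).
  by field; rewrite h gt_eqF.
by rewrite /v /= addrC subrK.
Qed.

Lemma Qc_mdp : (forall i j, `|a i - b j| <= 1) ->
  \sum_i \sum_j Qc i j * `|a i - b j| <= T.
Proof.
move=> hab.
apply: (@le_trans _ _ (\sum_i \sum_j u i * v j / T)).
  apply: ler_sum => i _; apply: ler_sum => j _.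
  rewrite /Qc mulrDl; case: eqP => [->|_]; last first.
    rewrite !mul0r add0r ler_piMr // ?mulr_ge0 ?invr_ge0 ?u_ge0 ?v_ge0 ?T_ge0 //.
  by rewrite subrr normr0 !mulr0 add0r ?mulr_ge0 ?invr_ge0 ?u_ge0 ?v_ge0 ?T_ge0.
rewrite {2}/T; apply: ler_sum => i _.
have e : \sum_j u i * v j / T = u i * (\sum_j v j) / T by rewrite mulr_sumr mulr_suml.
by rewrite e sumv uT.
Qed.
End Main.
End Gen.

Theorem mainTheorem3 (R : realType) (d n0 n1 : nat)
    (x0 : 'I_n0 -> 'rV[R]_d) (x1 : 'I_n1 -> 'rV[R]_d)
    (hn0 : (0 < n0)%N) (hn1 : (0 < n1)%N)
    (hx0 : injective x0) (hx1 : injective x1)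
    (f : 'rV[R]_d -> bool -> R)
    (hf : forall x b, 0 <= f x b <= 1)
    (m : nat)
    (hm : size [seq z <- emp_support (fun i => f (x0 i) false)
                 | z \in emp_support (fun j => f (x1 j) true)] = m)
    (delta : R) (hdelta : 0 <= delta)
    (hTV : DeltaTVDP f x0 x1 <= delta) :
  exists Q : 'I_n0 -> 'I_n1 -> R,
    is_coupling Q /\ DeltaMDP f x0 x1 Q <= delta.
Proof.
pose a := fun i => f (x0 i) false; pose b := fun j => f (x1 j) true.
have hab : forall i j, `|a i - b j| <= 1.
  move=> i j; rewrite /a /b.
  have /andP[h1 h2] := hf (x0 i) false; have /andP[h3 h4] := hf (x1 j) true.
  rewrite ler_norml; apply/andP; split; lra.
exists (Qc a b); split; [split; [|split]|].
- by move=> i j; apply: Qc_ge0.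
- by move=> i; apply: Qc_row.
- by move=> j; apply: Qc_col.
  rewrite /DeltaMDP; apply: le_trans (Qc_mdp hn0 hn1 hab) _.
  by rewrite -TVE.
Qed.
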